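(* Let $n\ge1$, let $X_r\sim\mathrm{Beta}(1/2,1/2)$ and let $Y_r$ be the output of the binomial channel with $n$ trials and input $X_r$. Then \[ \mathbb E\!\left[\log\!\Big(nX_r(1-X_r)+\tfrac1{12}\Big)\right]=2\log\!\left(\frac{1+\sqrt{3n+1}}{4\sqrt3}\right), \] and the Shannon entropy of $Y_r$ satisfies \[ H(Y_r)\ \ge\ \log\frac{\pi}{4}+\psi(n+1), \] where $\psi$ is the digamma function.
   Context: All logarithms are natural. The binomial channel with $n$ trials has transition law $P_{Y|X}(y|x)=\binom{n}{y}x^y(1-x)^{n-y}$, $x\in[0,1]$, $y\in\{0,\dots,n\}$. $\mathrm{Beta}(1/2,1/2)$ has density $\frac{1}{\pi\sqrt{x(1-x)}}$ on $(0,1)$; the induced output pmf is $P_{Y_r}(y)=\frac{\Gamma(y+1/2)\Gamma(n-y+1/2)}{\pi\,\Gamma(y+1)\Gamma(n-y+1)}$. $H(Y)=-\sum_y P_Y(y)\log P_Y(y)$. *)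

(* Defs.v *)
From Stdlib Require Import Reals.
From Coquelicot Require Import Coquelicot.
Open Scope R_scope.

Definition arcsine_density (x : R) : R := / (PI * sqrt (x * (1 - x))).

Definition binom_channel (n y : nat) (x : R) : R :=
  Binomial.C n y * x ^ y * (1 - x) ^ (n - y).

(* Output pmf of the binomial channel driven by X_r ~ Beta(1/2,1/2):
   P_{Y_r}(y) = E[P_{Y|X}(y|X_r)] = improper integral over (0,1). *)
Definition PYr (n y : nat) : R :=
  RInt_gen (fun x => arcsine_density x * binom_channel n y x)
           (at_right 0) (at_left 1).

Definition entropy (n : nat) (P : nat -> R) : R :=
  - sum_f_R0 (fun y => P y * ln (P y)) n.

Definition harmonic (m : nat) : R := sum_f_R0 (fun k => / INR (S k)) (pred m) .
Definition euler_gamma : R :=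
  real (Lim_seq (fun m => harmonic m - ln (INR m))).

Definition digamma (x : R) : R :=
  - euler_gamma + Series (fun k => / INR (S k) - / (INR k + x)).

(* Main.v *)
Require Import Defs.
From Stdlib Require Import Reals Lra Lia.
From Coquelicot Require Import Coquelicot.
Open Scope R_scope.

Lemma derive_cont_R (f : R -> R) x : ex_derive f x -> continuous f x.
Proof. apply (ex_derive_continuous (K:=R_AbsRing) (V:=R_NormedModule)). Qed.
Lemma ex_RInt_cont_R (f : R -> R) a b :
  (forall z, Rmin a b <= z <= Rmax a b -> continuous f z) -> ex_RInt f a b.
Proof. apply (ex_RInt_continuous (V:=R_CompleteNormedModule)). Qed.
Lemma is_RInt_derive_R (f df : R -> R) a b :
  (forall x, Rmin a b <= x <= Rmax a b -> is_derive f x (df x)) ->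
  (forall x, Rmin a b <= x <= Rmax a b -> continuous df x) ->
  is_RInt df a b (f b - f a).
Proof. apply (is_RInt_derive (V:=R_CompleteNormedModule)). Qed.
Lemma RInt_correct_R (f : R -> R) a b : ex_RInt f a b -> is_RInt f a b (RInt f a b).
Proof. apply (RInt_correct (V:=R_CompleteNormedModule)). Qed.
Lemma is_RInt_unique_R (f : R -> R) a b l : is_RInt f a b l -> RInt f a b = l.
Proof. apply (is_RInt_unique (V:=R_CompleteNormedModule)). Qed.
Lemma is_RInt_scal_R (f : R -> R) a b k l : is_RInt f a b l -> is_RInt (fun x => k * f x) a b (k * l).
Proof. apply (is_RInt_scal (V:=R_NormedModule)). Qed.
Lemma is_RInt_plus_R (f g : R -> R) a b l1 l2 : is_RInt f a b l1 -> is_RInt g a b l2 ->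
  is_RInt (fun x => f x + g x) a b (l1 + l2).
Proof. apply (is_RInt_plus (V:=R_NormedModule)). Qed.
Lemma is_RInt_minus_R (f g : R -> R) a b l1 l2 : is_RInt f a b l1 -> is_RInt g a b l2 ->
  is_RInt (fun x => f x - g x) a b (l1 - l2).
Proof. apply (is_RInt_minus (V:=R_NormedModule)). Qed.
Lemma is_RInt_ext_R (f g : R -> R) a b l : (forall x, Rmin a b < x < Rmax a b -> f x = g x) ->
  is_RInt f a b l -> is_RInt g a b l.
Proof. apply (is_RInt_ext (V:=R_NormedModule)). Qed.
Lemma RInt_ext_R (f g : R -> R) a b : (forall x, Rmin a b < x < Rmax a b -> f x = g x) ->
  RInt f a b = RInt g a b.
Proof. apply (RInt_ext (V:=R_CompleteNormedModule)). Qed.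
Lemma is_RInt_Chasles_R (f : R -> R) a b c l1 l2 : is_RInt f a b l1 -> is_RInt f b c l2 -> is_RInt f a c (l1 + l2).
Proof. apply (is_RInt_Chasles (V:=R_NormedModule)). Qed.
Lemma is_RInt_const_R a b (c : R) : is_RInt (fun _ => c) a b ((b - a) * c).
Proof. apply (is_RInt_const (V:=R_NormedModule)). Qed.
Ltac req := match goal with |- ?a = ?b => change (@eq R a b) end.
Lemma RInt_comp_lin_R (f : R -> R) u v a b : ex_RInt f (u * a + v) (u * b + v) ->
  RInt (fun y => u * f (u * y + v)) a b = RInt f (u * a + v) (u * b + v).
Proof. apply (RInt_comp_lin (V:=R_CompleteNormedModule)). Qed.
Lemma RInt_swap_R (f : R -> R) a b : ex_RInt f a b -> RInt f b a = - RInt f a b.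
Proof. intro H. symmetry. apply (opp_RInt_swap (V:=R_CompleteNormedModule)); auto. Qed.
Lemma RInt_comp_lin_R' (f : R -> R) u v a b a' b' : a' = u*a+v -> b' = u*b+v -> ex_RInt f a' b' ->
  RInt (fun y => u * f (u * y + v)) a b = RInt f a' b'.
Proof. intros -> ->. apply RInt_comp_lin_R. Qed.

Fixpoint aa (m:nat) : R := match m with O => 1 | S k => aa k * (2*INR k+1)/(2*INR k+2) end.
Fixpoint OO (m:nat) : R := match m with O => 0 | S k => OO k + /(2*INR k+1) end.
Fixpoint HH (m:nat) : R := match m with O => 0 | S k => HH k + /(INR k+1) end.

Lemma sum_refl (f : nat -> R) n : sum_f_R0 f n = sum_f_R0 (fun y => f (n - y)%nat) n.
Proof.
  revert f; induction n as [|n IH]; intro f; [reflexivity|].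
  rewrite decomp_sum by lia. simpl pred. rewrite (IH (fun i => f (S i))).
  rewrite tech5. replace (S n - S n)%nat with 0%nat by lia.
  rewrite Rplus_comm. f_equal. apply sum_eq. intros i Hi. f_equal. lia.
Qed.

Lemma sum_shift (f : nat -> R) n : sum_f_R0 f (S n) = f 0%nat + sum_f_R0 (fun z => f (S z)) n.
Proof. rewrite decomp_sum by lia. reflexivity. Qed.

Lemma scal_sum_r (f : nat -> R) n x : sum_f_R0 f n * x = sum_f_R0 (fun i => f i * x) n.
Proof. rewrite Rmult_comm. apply scal_sum. Qed.

Lemma aa_S k : (INR k + 1) * aa (S k) = (INR k + /2) * aa k.
Proof. simpl aa. field. pose proof (pos_INR k). lra. Qed.

Lemma aa_pos m : 0 < aa m.
Proof. induction m; simpl; [lra|]. pose proof (pos_INR m).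
  apply Rmult_lt_0_compat; [apply Rmult_lt_0_compat|]; try lra. apply Rinv_0_lt_compat; lra. Qed.

Definition cc n := sum_f_R0 (fun y => aa y * aa (n - y)) n.

Lemma cc_1 n : cc n = 1.
Proof.
  induction n as [|n IH]. { unfold cc; simpl; lra. }
  set (T := fun m => sum_f_R0 (fun y => INR y * aa y * aa (m - y)) m).
  assert (HT : forall m, 2 * T m = INR m * cc m).
  { intro m. unfold T, cc. rewrite scal_sum.
    replace (sum_f_R0 (fun y : nat => INR y * aa y * aa (m - y) * 2) m) with
     (sum_f_R0 (fun y : nat => INR y * aa y * aa (m - y)) m +
      sum_f_R0 (fun y : nat => INR y * aa y * aa (m - y)) m) by (rewrite <- plus_sum; apply sum_eq; intros; ring).
    rewrite sum_refl at 2. rewrite <- plus_sum, scal_sum. apply sum_eq. intros i Hi.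
    replace (m - (m - i))%nat with i by lia. rewrite minus_INR by lia. ring. }
  assert (HT1 : T (S n) = T n + cc n / 2).
  { unfold T. rewrite sum_shift. simpl INR at 1. rewrite Rmult_0_l, !Rmult_0_l, Rplus_0_l.
    unfold cc. unfold Rdiv. rewrite scal_sum_r. rewrite <- plus_sum. apply sum_eq. intros i Hi.
    replace (S n - S i)%nat with (n - i)%nat by lia.
    assert (E: INR (S i) * aa (S i) = (INR i + /2) * aa i) by (rewrite S_INR; apply aa_S).
    rewrite E. ring. }
  pose proof (HT (S n)) as H1. pose proof (HT n) as H2. rewrite HT1 in H1. rewrite S_INR in H1.
  rewrite IH in H2, H1. pose proof (pos_INR n).
  apply (Rmult_eq_reg_l (INR n + 1)); lra.
Qed.

Definition EE n := sum_f_R0 (fun y => aa y * aa (n - y) * OO y) n.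

Lemma EE_val n : EE n = HH n / 2.
Proof.
  induction n as [|n IH]. { unfold EE; simpl; lra. }
  set (U := fun m => sum_f_R0 (fun y => INR y * aa y * aa (m - y) * OO y) m).
  set (V := fun m => sum_f_R0 (fun y => INR y * aa y * aa (m - y) * OO (m - y)) m).
  assert (HUV : forall m, U m + V m = INR m * EE m).
  { intro m. unfold U, V, EE. rewrite scal_sum. rewrite (sum_refl (fun y => INR y * aa y * aa (m - y) * OO (m - y)) m).
    rewrite <- plus_sum. apply sum_eq. intros i Hi.
    replace (m - (m - i))%nat with i by lia. rewrite minus_INR by lia. ring. }
  assert (HU : U (S n) = U n + EE n / 2 + cc n / 2).
  { unfold U. rewrite sum_shift. simpl INR at 1. rewrite !Rmult_0_l, Rplus_0_l.
    unfold cc, EE, Rdiv. rewrite !scal_sum_r. rewrite <- !plus_sum. apply sum_eq. intros i Hi.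
    replace (S n - S i)%nat with (n - i)%nat by lia.
    assert (E: INR (S i) * aa (S i) = (INR i + /2) * aa i) by (rewrite S_INR; apply aa_S).
    simpl OO. replace (INR (S i) * aa (S i) * aa (n - i) * (OO i + / (2 * INR i + 1)))
      with ((INR (S i) * aa (S i)) * aa (n - i) * (OO i + / (2 * INR i + 1))) by ring.
    rewrite E. field. pose proof (pos_INR i); lra. }
  assert (HV : V (S n) = V n + EE n / 2).
  { unfold V. rewrite sum_shift. simpl INR at 1. rewrite !Rmult_0_l, Rplus_0_l.
    assert (EE n = sum_f_R0 (fun y => aa y * aa (n - y) * OO (n-y)) n) as ->.
    { unfold EE. rewrite sum_refl. apply sum_eq. intros i Hi.
      replace (n - (n - i))%nat with i by lia. ring. }
    unfold Rdiv. rewrite !scal_sum_r. rewrite <- !plus_sum. apply sum_eq. intros i Hi.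
    replace (S n - S i)%nat with (n - i)%nat by lia.
    assert (E: INR (S i) * aa (S i) = (INR i + /2) * aa i) by (rewrite S_INR; apply aa_S).
    replace (INR (S i) * aa (S i) * aa (n - i) * OO (n - i))
      with ((INR (S i) * aa (S i)) * aa (n - i) * OO (n - i)) by ring.
    rewrite E. field. }
  pose proof (HUV (S n)) as H1. pose proof (HUV n) as H2.
  rewrite HU, HV, cc_1 in H1. rewrite S_INR in H1. rewrite IH in H2, H1.
  simpl HH. pose proof (pos_INR n).
  apply (Rmult_eq_reg_l (INR n + 1)); [|lra]. rewrite <- H1.
  replace ((INR n + 1) * ((HH n + / (INR n + 1)) / 2)) with (INR n * (HH n / 2) + HH n / 2 + /2) by (field; lra).
  rewrite <- H2. field.
Qed.

Definition kf i j (t:R) := sin (t/2) ^ i * cos (t/2) ^ j.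
Definition K i j := RInt (kf i j) 0 PI.

Lemma kf_cont i j x : continuous (kf i j) x.
Proof. apply derive_cont_R. unfold kf. auto_derive. auto. Qed.

Lemma kf_ex i j a b : ex_RInt (kf i j) a b.
Proof. apply ex_RInt_cont_R. intros; apply kf_cont. Qed.

Lemma K_is i j : is_RInt (kf i j) 0 PI (K i j).
Proof. apply RInt_correct_R, kf_ex. Qed.

Lemma K_ibp i j : (INR i + 1) * K i (S (S j)) = (INR j + 1) * K (S (S i)) j.
Proof.
  set (f := fun t => sin (t/2) ^ (S i) * cos (t/2) ^ (S j)).
  set (df := fun t => /2 * ((INR i + 1) * kf i (S (S j)) t - (INR j + 1) * kf (S (S i)) j t)).
  assert (H : is_RInt df 0 PI (f PI - f 0)).
  { apply is_RInt_derive_R.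

    - intros x _. unfold f, df, kf. auto_derive; auto.
      assert (Hi: (match i with 0%nat=>1 | S _ => INR i + 1 end) = INR i + 1) by (destruct i; simpl; lra).
      assert (Hj: (match j with 0%nat=>1 | S _ => INR j + 1 end) = INR j + 1) by (destruct j; simpl; lra).
      rewrite Hi, Hj. replace (x * /2) with (x/2) by reflexivity. simpl. ring.
    - intros x _. apply derive_cont_R. unfold df, kf. auto_derive. auto. }
  assert (H0 : f PI - f 0 = 0).
  { unfold f. rewrite cos_PI2. replace (0/2) with 0 by field. rewrite sin_0. simpl. ring. }
  rewrite H0 in H.
  assert (H2 : is_RInt df 0 PI (/2 * ((INR i + 1) * K i (S (S j)) - (INR j + 1) * K (S (S i)) j))).
  { apply is_RInt_scal_R, is_RInt_minus_R; apply is_RInt_scal_R, K_is. }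
  apply is_RInt_unique_R in H. apply is_RInt_unique_R in H2. rewrite H in H2. lra.
Qed.

Lemma K_sum i j : K i j = K (S (S i)) j + K i (S (S j)).
Proof.
  apply is_RInt_unique_R. eapply is_RInt_ext_R; [|apply is_RInt_plus_R; apply K_is].
  intros x _. unfold kf. simpl. pose proof (sin2_cos2 (x/2)) as E. unfold Rsqr in E.
  transitivity (sin (x/2) ^ i * cos (x/2) ^ j * (sin (x / 2) * sin (x / 2) + cos (x / 2) * cos (x / 2))).
  ring. rewrite E. ring.
Qed.

Lemma K00 : K 0 0 = PI.
Proof. pose proof (is_RInt_const_R 0 PI 1) as H. apply is_RInt_unique_R in H.
  unfold K. rewrite (RInt_ext_R (kf 0 0) (fun _ => 1)). rewrite H. change ((PI - 0) * 1 = PI). ring.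
  intros; unfold kf; simpl. ring. Qed.

Lemma K10 : K 1 0 = 2.
Proof.
  assert (E : -2 * cos (PI/2) - -2 * cos (0/2) = 2).
  {  rewrite cos_PI2. replace (0/2) with 0 by field. rewrite cos_0. ring. }
  apply is_RInt_unique_R.
  assert (H : is_RInt (kf 1 0) 0 PI ((fun t => -2 * cos (t/2)) PI - (fun t => -2 * cos (t/2)) 0)).
  { apply (is_RInt_derive_R (fun t => -2 * cos (t/2))).

  - intros x _. auto_derive; auto. unfold kf. simpl. replace (x * /2) with (x/2) by reflexivity. match goal with |- ?a = ?b => change (@eq R a b) end. field.
  - intros; apply kf_cont. }
  simpl in H. rewrite E in H. exact H.
Qed.

Lemma K_i0 i : (INR i + 1) * K i 0 = (INR i + 2) * K (S (S i)) 0.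
Proof.
  pose proof (K_ibp i 0) as H. pose proof (K_sum i 0) as H2. simpl INR in H. rewrite H2. nra.
Qed.

Lemma K_mono i : K (S i) 0 <= K i 0.
Proof.
  apply RInt_le. { pose proof PI_RGT_0; lra. } 1,2: apply kf_ex.
  intros x Hx. unfold kf. simpl. rewrite !Rmult_1_r.
  assert (0 <= sin (x/2) <= 1).
  { split. apply sin_ge_0; pose proof PI_RGT_0; lra. apply SIN_bound. }
  assert (0 <= sin (x/2) ^ i) by (apply pow_le; lra).
  nra.
Qed.

Lemma K_pos i : 0 < K i 0.
Proof.
  induction i as [i IH] using (well_founded_ind Wf_nat.lt_wf).
  destruct i as [|[|i]]. rewrite K00; apply PI_RGT_0. rewrite K10; lra.
  pose proof (K_i0 i). assert (0 < K i 0) by (apply IH; lia). pose proof (pos_INR i).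
  nra.
Qed.

Lemma K_wallis i : (INR i + 1) * K i 0 * K (S i) 0 = 2 * PI.
Proof.
  induction i as [|i IH]. { rewrite K00, K10. simpl. ring. }
  rewrite S_INR. pose proof (K_i0 i) as H.
  replace ((INR i + 1 + 1) * K (S i) 0 * K (S (S i)) 0) with (K (S i) 0 * ((INR i + 2) * K (S (S i)) 0)) by ring.
  rewrite <- H, <- IH. ring.
Qed.



Lemma K_even m : K (2 * m) 0 = PI * aa m.
Proof.
  induction m as [|m IH]. { simpl. rewrite K00. ring. }
  replace (2 * S m)%nat with (S (S (2*m))) by lia.
  pose proof (K_i0 (2*m)) as H. rewrite mult_INR in H. replace (INR 2) with 2 in H by reflexivity. rewrite IH in H.
  simpl aa. pose proof (pos_INR m).
  apply (Rmult_eq_reg_l (2 * INR m + 2)); [|lra]. rewrite <- H. field. lra.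
Qed.

Lemma wallis_bound m : PI * INR m * aa m ^ 2 <= 1.
Proof.
  destruct m as [|k]. { simpl. lra. }
  pose proof (K_wallis (S (2*k))) as W. pose proof (K_mono (S (2*k))) as M.
  replace (S (S (2*k))) with (2 * S k)%nat in W, M by lia.
  rewrite K_even in W, M. pose proof (K_pos (S (2*k))) as P.
  set (k1 := K (S (2*k)) 0) in *. rewrite S_INR, mult_INR in W. simpl INR in W.
  rewrite S_INR. pose proof PI_RGT_0. pose proof (pos_INR k). pose proof (aa_pos (S k)).
  assert (PI * aa (S k) * (PI * aa (S k)) <= k1 * (PI * aa (S k))) by (apply Rmult_le_compat_r; nra).
  assert (k1 * (PI * aa (S k)) = PI / (INR k + 1)).
  { apply (Rmult_eq_reg_l (2*(INR k+1))); [|lra]. field_simplify; [|lra]. lra. }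
  assert (PI * (INR k + 1) * aa (S k) ^ 2 = (INR k + 1) / PI * (PI * aa (S k) * (PI * aa (S k)))) by (field; lra).
  rewrite H4. 
  apply Rle_trans with ((INR k + 1) / PI * (PI / (INR k + 1))).
  apply Rmult_le_compat_l. apply Rle_mult_inv_pos; lra. lra.
  right. field. lra.
Qed.

Lemma C_step p q : Binomial.C (p + S q) p * (INR q + 1) = Binomial.C (p + q) p * (INR (p+q) + 1).
Proof.
  unfold Binomial.C. replace (p + S q - p)%nat with (S q) by lia. replace (p + q - p)%nat with q by lia.
  replace (p + S q)%nat with (S (p + q)) by lia. rewrite !fact_simpl, !mult_INR, !S_INR.
  pose proof (INR_fact_neq_0 p). pose proof (INR_fact_neq_0 q). pose proof (pos_INR q).
  field. repeat split; lra.
Qed.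

Lemma Kb p q : Binomial.C (p + q) p * K (2*p) (2*q) / PI = aa p * aa q.
Proof.
  pose proof PI_RGT_0.
  induction q as [|q IH].
  { rewrite Nat.add_0_r. unfold Binomial.C. rewrite Nat.sub_diag. simpl (2*0)%nat. rewrite K_even.
    simpl. field. split. apply INR_fact_neq_0. lra. }
  replace (2 * S q)%nat with (S (S (2 * q))) by lia.
  pose proof (K_ibp (2*p) (2*q)) as H1. pose proof (K_sum (2*p) (2*q)) as H2.
  rewrite !mult_INR in H1. replace (INR 2) with 2 in H1 by reflexivity.
  assert (E : K (2*p) (S (S (2*q))) * (2 * INR (p + q) + 2) = (2 * INR q + 1) * K (2*p) (2*q)).
  { rewrite plus_INR. rewrite H2. nra. }
  simpl aa. pose proof (C_step p q) as Cs. pose proof (pos_INR q). pose proof (pos_INR (p+q)).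
  apply (Rmult_eq_reg_r ((INR q + 1) * (2 * INR (p+q) + 2))); [|nra].
  replace (Binomial.C (p + S q) p * K (2 * p) (S (S (2 * q))) / PI * ((INR q + 1) * (2 * INR (p + q) + 2)))
    with ((Binomial.C (p + S q) p * (INR q + 1)) * (K (2 * p) (S (S (2 * q))) * (2 * INR (p + q) + 2)) / PI) by (field; lra).
  rewrite Cs, E.
  replace (Binomial.C (p + q) p * (INR (p + q) + 1) * ((2 * INR q + 1) * K (2 * p) (2 * q)) / PI)
    with ((Binomial.C (p + q) p * K (2 * p) (2 * q) / PI) * ((INR (p + q) + 1) * (2 * INR q + 1))) by (field; lra).
  rewrite IH. field. lra.
Qed.


Lemma ball_R (x y : R) (e : R) : ball x e y <-> Rabs (y - x) < e.
Proof. reflexivity. Qed.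

Lemma cont_eps (f : R->R) x : continuous f x -> forall e, 0 < e ->
  exists d, 0 < d /\ forall y, Rabs (y - x) < d -> Rabs (f y - f x) < e.
Proof.
  intros H e He. assert (L := H (ball (f x) (mkposreal e He)) (locally_ball _ _)).
  destruct L as [d Hd]. exists d. split. apply cond_pos. intros y Hy. apply Hd. exact Hy.
Qed.

Lemma acos_small d x : 0 < d <= PI -> cos d < x <= 1 -> acos x < d.
Proof.
  intros Hd Hx. pose proof (COS_bound d). destruct (Rlt_or_le (acos x) d) as [h|h]; auto.
  pose proof (acos_bound x).
  assert (cos (acos x) <= cos d) by (apply cos_decr_1; lra).
  rewrite cos_acos in H1 by lra. lra.
Qed.

Section Subst.
Variable F : R -> R.
Hypothesis HF : forall x, 0 <= x <= 1 -> continuous F x.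

Let g t := (1 - cos t) / 2.
Let h t := F (g t).
Let A z := RInt h 0 z.
Let f x := arcsine_density x * F x.

Lemma g_range t : 0 <= g t <= 1.
Proof. unfold g. pose proof (COS_bound t). lra. Qed.

Lemma h_cont t : continuous h t.
Proof.
  unfold h. apply (continuous_comp (U:=R_UniformSpace) (V:=R_UniformSpace) g F).
  apply derive_cont_R. unfold g. auto_derive. auto. apply HF, g_range.
Qed.

Lemma h_ex a b : ex_RInt h a b.
Proof. apply ex_RInt_cont_R. intros; apply h_cont. Qed.

Lemma A_cont z : continuous A z.
Proof.
  apply (continuous_RInt_1 (V:=R_NormedModule) h 0 z A).
  apply filter_forall. intros; apply RInt_correct_R, h_ex.
Qed.

Lemma dens_cont x : 0 < x < 1 -> continuous arcsine_density x.
Proof.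
  intros Hx. apply derive_cont_R. unfold arcsine_density. auto_derive.
  pose proof PI_RGT_0. assert (0 < x * (1 - x)) by nra. split; [lra|]. split; auto.
  apply Rgt_not_eq. apply Rmult_gt_0_compat; [lra|]. apply sqrt_lt_R0; lra.
Qed.

Lemma f_cont x : 0 < x < 1 -> continuous f x.
Proof.
  intros Hx. unfold f. apply (continuous_mult (U:=R_UniformSpace) (K:=R_AbsRing) arcsine_density F).
  apply dens_cont; auto. apply HF; lra.
Qed.

Lemma cos_open t : 0 < t < PI -> -1 < cos t < 1.
Proof.
  intros Ht. split.
  - rewrite <- cos_PI. apply cos_decreasing_1; lra.
  - rewrite <- cos_0. apply cos_decreasing_1; lra.
Qed.

Lemma f_value a b : 0 < a < 1 -> 0 < b < 1 ->
  RInt f a b = / PI * (A (acos (1 - 2*b)) - A (acos (1 - 2*a))).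
Proof.
  intros Ha Hb. pose proof PI_RGT_0 as HPI.
  set (u := acos (1 - 2*a)). set (v := acos (1 - 2*b)).
  assert (Hu : 0 < u < PI) by (apply acos_bound_lt; lra).
  assert (Hv : 0 < v < PI) by (apply acos_bound_lt; lra).
  assert (gu : g u = a) by (unfold g, u; rewrite cos_acos by lra; field).
  assert (gv : g v = b) by (unfold g, v; rewrite cos_acos by lra; field).
  assert (Hin : forall x, Rmin u v <= x <= Rmax u v -> 0 < x < PI).
  { intros x Hx. destruct (Rle_dec u v); [rewrite Rmin_left, Rmax_right in Hx by lra|rewrite Rmin_right, Rmax_left in Hx by lra]; lra. }
  assert (C := is_RInt_comp (V:=R_CompleteNormedModule) f g (fun t => sin t / 2) u v).
  rewrite gu, gv in C.
  assert (C' : is_RInt (fun y => / PI * h y) u v (RInt f a b)).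
  { eapply is_RInt_ext_R; [|apply C].
    - intros x Hx. assert (Hx' : 0 < x < PI) by (apply Hin; lra).
      pose proof (sin_gt_0 x (proj1 Hx') (proj2 Hx')).
      unfold f, h, arcsine_density. change (scal (sin x / 2) (/ (PI * sqrt (g x * (1 - g x))) * F (g x)) = / PI * F (g x)).
      assert (E : g x * (1 - g x) = (sin x / 2)²).
      { unfold g, Rsqr. pose proof (sin2_cos2 x) as S. unfold Rsqr in S. field_simplify. nra. }
      rewrite E, sqrt_Rsqr by lra. unfold scal; simpl; unfold mult; simpl. field. lra.
    - intros x Hx. apply f_cont. pose proof (cos_open x (Hin x Hx)). unfold g. lra.
    - intros x Hx. split.
      + unfold g. auto_derive; auto. field.
      + apply derive_cont_R. auto_derive. auto. }
  apply is_RInt_unique_R in C'.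
  assert (Ch : A v = A u + RInt h u v).
  { apply is_RInt_unique_R. apply is_RInt_Chasles_R with u; apply RInt_correct_R, h_ex. }
  rewrite <- C'. 
  assert (S : is_RInt (fun y => / PI * h y) u v (/PI * RInt h u v)) by (apply is_RInt_scal_R, RInt_correct_R, h_ex).
  apply is_RInt_unique_R in S. rewrite S, Ch. req. ring.
Qed.


Lemma arcsine_sub :
  is_RInt_gen f (at_right 0) (at_left 1) (/ PI * RInt h 0 PI).
Proof.
  pose proof PI_RGT_0 as HPI.
  intros P [eps Heps].
  assert (He : 0 < eps * PI / 2) by (pose proof (cond_pos eps); nra).
  destruct (cont_eps A 0 (A_cont 0) _ He) as [d1 [Hd1 H1]].
  destruct (cont_eps A PI (A_cont PI) _ He) as [d2 [Hd2 H2]].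
  set (e1 := Rmin d1 PI). set (e2 := Rmin d2 PI).
  assert (He1 : 0 < e1 <= PI) by (unfold e1; split; [apply Rmin_glb_lt|apply Rmin_r]; lra).
  assert (He2 : 0 < e2 <= PI) by (unfold e2; split; [apply Rmin_glb_lt|apply Rmin_r]; lra).
  assert (c1 : cos e1 < 1) by (rewrite <- cos_0; apply cos_decreasing_1; lra).
  assert (c2 : cos e2 < 1) by (rewrite <- cos_0; apply cos_decreasing_1; lra).
  apply Filter_prod with (Q := fun a => 0 < a < 1 /\ cos e1 < 1 - 2*a) (R := fun b => 0 < b < 1 /\ cos e2 < 2*b - 1).
  - assert (p : 0 < Rmin (1/2) ((1 - cos e1)/2)) by (apply Rmin_glb_lt; lra).
    exists (mkposreal _ p). intros y Hy Hy0. change (Rabs (y - 0) < Rmin (1 / 2) ((1 - cos e1) / 2)) in Hy.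
    rewrite Rminus_0_r, Rabs_pos_eq in Hy by lra.
    pose proof (Rmin_l (1/2) ((1 - cos e1)/2)). pose proof (Rmin_r (1/2) ((1 - cos e1)/2)). lra.
  - assert (p : 0 < Rmin (1/2) ((1 - cos e2)/2)) by (apply Rmin_glb_lt; lra).
    exists (mkposreal _ p). intros y Hy Hy0. change (Rabs (y - 1) < Rmin (1 / 2) ((1 - cos e2) / 2)) in Hy.
    rewrite Rabs_minus_sym, Rabs_pos_eq in Hy by lra.
    pose proof (Rmin_l (1/2) ((1 - cos e2)/2)). pose proof (Rmin_r (1/2) ((1 - cos e2)/2)). lra.
  - intros a b [Ha Ha'] [Hb Hb']. exists (RInt f a b). split.
    + apply RInt_correct_R, ex_RInt_cont_R. intros z Hz. apply f_cont.
      destruct (Rle_dec a b); [rewrite Rmin_left, Rmax_right in Hz by lra|rewrite Rmin_right, Rmax_left in Hz by lra]; lra.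
    + apply Heps. change (Rabs (RInt f a b - / PI * RInt h 0 PI) < eps). rewrite f_value by lra.
      assert (Hu : acos (1 - 2*a) < e1) by (apply acos_small; lra).
      pose proof (acos_bound (1 - 2*a)).
      assert (Hv : acos (2*b - 1) < e2) by (apply acos_small; lra).
      pose proof (acos_bound (2*b-1)).
      replace (1 - 2*b) with (- (2*b - 1)) by ring. rewrite acos_opp.
      assert (Ru : Rabs (A (acos (1 - 2*a)) - A 0) < eps * PI / 2).
      { apply H1. rewrite Rminus_0_r, Rabs_pos_eq by lra. pose proof (Rmin_l d1 PI) as m1. fold e1 in m1. lra. }
      assert (Rv : Rabs (A (PI - acos (2*b - 1)) - A PI) < eps * PI / 2).
      { apply H2. replace (PI - acos (2 * b - 1) - PI) with (- acos (2*b-1)) by ring.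
        rewrite Rabs_Ropp, Rabs_pos_eq by lra. pose proof (Rmin_l d2 PI) as m2. fold e2 in m2. lra. }
      assert (A0 : A 0 = 0) by (unfold A; apply (RInt_point (V:=R_CompleteNormedModule))).
      fold (A PI).
      replace (/ PI * (A (PI - acos (2 * b - 1)) - A (acos (1 - 2 * a))) - / PI * A PI)
        with (/ PI * ((A (PI - acos (2 * b - 1)) - A PI) - (A (acos (1 - 2 * a)) - A 0))) by (rewrite A0; ring).
      rewrite Rabs_mult, Rabs_pos_eq by (left; apply Rinv_0_lt_compat; lra).
      apply Rabs_def2 in Ru. apply Rabs_def2 in Rv.
      assert (Rabs ((A (PI - acos (2 * b - 1)) - A PI) - (A (acos (1 - 2 * a)) - A 0)) < eps * PI).
      { apply Rabs_def1; lra. }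
      apply Rmult_lt_reg_l with PI; auto. rewrite <- Rmult_assoc, Rinv_r by lra. lra.
Qed.

End Subst.

Definition Lg r s := ln (1 - 2*r*cos s + r^2).
Definition FF r := RInt (Lg r) 0 PI.

Lemma arg_lb r s : (1 - Rabs r)^2 <= 1 - 2*r*cos s + r^2.
Proof.
  pose proof (COS_bound s). assert (r * cos s <= Rabs r).
  { destruct (Rcase_abs r); [rewrite Rabs_left|rewrite Rabs_right]; try lra; nra. }
  assert (Rabs r * Rabs r = r * r) by (rewrite <- Rabs_mult; apply Rabs_pos_eq; nra).
  nra.
Qed.

Lemma arg_ub r s : 1 - 2*r*cos s + r^2 <= (1 + Rabs r)^2.
Proof.
  pose proof (COS_bound s). assert (- (r * cos s) <= Rabs r).
  { destruct (Rcase_abs r); [rewrite Rabs_left|rewrite Rabs_right]; try lra; nra. }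
  assert (Rabs r * Rabs r = r * r) by (rewrite <- Rabs_mult; apply Rabs_pos_eq; nra).
  nra.
Qed.

Lemma arg_pos r s : Rabs r < 1 -> 0 < 1 - 2*r*cos s + r^2.
Proof. intros. pose proof (arg_lb r s). assert (0 < (1 - Rabs r)^2) by (apply pow_lt; lra). lra. Qed.

Lemma Lg_cont r s : Rabs r < 1 -> continuous (Lg r) s.
Proof. intros H. apply derive_cont_R. unfold Lg. auto_derive. apply arg_pos; auto. Qed.

Lemma Lg_ex r a b : Rabs r < 1 -> ex_RInt (Lg r) a b.
Proof. intros H. apply ex_RInt_cont_R. intros; apply Lg_cont; auto. Qed.

Definition MM rho := 2 * ln (1 + rho) - 2 * ln (1 - rho).

Lemma Lg_bound r rho s : Rabs r <= rho < 1 -> Rabs (Lg r s) <= MM rho.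
Proof.
  intros [H1 H2]. pose proof (Rabs_pos r).
  pose proof (arg_lb r s). pose proof (arg_ub r s).
  assert (P1 : 0 < (1 - rho)^2) by (apply pow_lt; lra).
  assert (L1 : ln ((1 - rho)^2) <= Lg r s).
  { unfold Lg. apply ln_le; auto. assert ((1-rho)^2 <= (1 - Rabs r)^2) by (apply pow_incr; lra). lra. }
  assert (L2 : Lg r s <= ln ((1 + rho)^2)).
  { unfold Lg. apply ln_le. apply arg_pos; lra. assert ((1+Rabs r)^2 <= (1 + rho)^2) by (apply pow_incr; lra). lra. }
  rewrite ln_pow in L1, L2 by lra. simpl INR in L1, L2.
  assert (ln (1 - rho) <= 0) by (rewrite <- ln_1; apply ln_le; lra).
  assert (0 <= ln (1 + rho)) by (rewrite <- ln_1; apply ln_le; lra).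
  unfold MM. apply Rabs_le. lra.
Qed.

Lemma FF_bound r rho : Rabs r <= rho < 1 -> Rabs (FF r) <= PI * MM rho.
Proof.
  intros H. unfold FF. replace (PI * MM rho) with ((PI - 0) * MM rho) by ring.
  apply abs_RInt_le_const. pose proof PI_RGT_0; lra. apply Lg_ex; lra.
  intros t _. apply Lg_bound; auto.
Qed.

Lemma FF_even r : Rabs r < 1 -> FF (-r) = FF r.
Proof.
  intros H. unfold FF.
  assert (E := RInt_comp_lin_R' (Lg r) (-1) PI 0 PI PI 0 ltac:(ring) ltac:(ring) (Lg_ex r PI 0 H)).
  rewrite (RInt_swap_R (Lg r) 0 PI) in E by (apply Lg_ex; exact H).
  rewrite <- (Ropp_involutive (RInt (Lg r) 0 PI)). rewrite <- E.
  assert (S : is_RInt (fun y => -1 * Lg r (-1 * y + PI)) 0 PI (-1 * RInt (Lg (-r)) 0 PI)).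
  { apply is_RInt_scal_R. apply is_RInt_ext_R with (Lg (-r)).
    intros x _. unfold Lg. replace (-1 * x + PI) with (PI - x) by ring. rewrite Rtrigo_facts.cos_pi_minus. f_equal. ring.
    apply RInt_correct_R, Lg_ex. rewrite Rabs_Ropp; exact H. }
  apply is_RInt_unique_R in S. rewrite S. lra.
Qed.

Lemma FF_double r : Rabs r < 1 -> FF r + FF (-r) = FF (r^2).
Proof.
  intros H. pose proof PI_RGT_0 as HPI.
  assert (H2 : Rabs (r^2) < 1).
  { rewrite <- RPow_abs. simpl. rewrite Rmult_1_r. pose proof (Rabs_pos r). nra. }
  assert (H' : Rabs (-r) < 1) by (rewrite Rabs_Ropp; exact H).
  assert (E1 : FF r + FF (-r) = RInt (fun s => Lg (r^2) (2 * s)) 0 PI).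
  { unfold FF. symmetry. apply is_RInt_unique_R. apply is_RInt_ext_R with (fun s => Lg r s + Lg (-r) s).
    - intros x _. unfold Lg. rewrite <- ln_mult by (apply arg_pos; assumption). f_equal.
      rewrite cos_2a_cos. ring.
    - apply is_RInt_plus_R; apply RInt_correct_R, Lg_ex; assumption. }
  assert (E2 : RInt (fun s => 2 * Lg (r^2) (2 * s + 0)) 0 PI = RInt (Lg (r^2)) 0 (2*PI)).
  { apply RInt_comp_lin_R'; [ring|ring|apply Lg_ex; exact H2]. }
  assert (E3 : RInt (fun s => 2 * Lg (r^2) (2 * s + 0)) 0 PI = 2 * RInt (fun s => Lg (r^2) (2 * s)) 0 PI).
  { apply is_RInt_unique_R. apply is_RInt_scal_R. apply is_RInt_ext_R with (fun s => Lg (r^2) (2 * s)).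
    intros; rewrite Rplus_0_r; reflexivity.
    apply RInt_correct_R, ex_RInt_cont_R. intros. apply (continuous_comp (U:=R_UniformSpace) (V:=R_UniformSpace) (fun s => 2 * s) (Lg (r^2))).
    apply derive_cont_R; auto_derive; exact I. apply Lg_cont; exact H2. }
  assert (E4 : RInt (Lg (r^2)) 0 (2*PI) = FF (r^2) + RInt (Lg (r^2)) PI (2*PI)).
  { apply is_RInt_unique_R. apply is_RInt_Chasles_R with PI; apply RInt_correct_R, Lg_ex; exact H2. }
  assert (E5 : RInt (Lg (r^2)) PI (2*PI) = FF (r^2)).
  { assert (E := RInt_comp_lin_R' (Lg (r^2)) (-1) (2*PI) 0 PI (2*PI) PI ltac:(ring) ltac:(ring) (Lg_ex _ (2*PI) PI H2)).
    rewrite (RInt_swap_R (Lg (r^2)) PI (2*PI)) in E by (apply Lg_ex; exact H2).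
    assert (S : is_RInt (fun y => -1 * Lg (r^2) (-1 * y + 2*PI)) 0 PI (-1 * FF (r^2))).
    { apply is_RInt_scal_R. apply is_RInt_ext_R with (Lg (r^2)).
      intros x _. unfold Lg. replace (-1 * x + 2*PI) with (-x + 2*INR 1*PI) by (simpl; ring).
      rewrite cos_period, cos_neg. reflexivity.
      apply RInt_correct_R, Lg_ex; exact H2. }
    apply is_RInt_unique_R in S. lra. }
  rewrite E1. apply (Rmult_eq_reg_l 2); [|lra]. rewrite <- E3, E2, E4, E5. lra.
Qed.

Lemma pow2_ge k : INR k <= 2 ^ k.
Proof.
  induction k. simpl; lra. rewrite S_INR. simpl.
  assert (1 <= 2 ^ k) by (apply pow_R1_Rle; lra). lra.
Qed.

Lemma FF_zero r : Rabs r < 1 -> FF r = 0.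
Proof.
  intros H. set (rho := Rabs r). pose proof PI_RGT_0.
  assert (Hk : forall k s, Rabs s <= rho -> 2 ^ k * Rabs (FF s) <= PI * MM rho).
  { induction k as [|k IH]; intros s Hs.
    - simpl. rewrite Rmult_1_l. apply FF_bound. unfold rho in *; lra.
    - assert (Hs1 : Rabs s < 1) by (unfold rho in *; lra).
      assert (E : 2 * FF s = FF (s^2)).
      { rewrite <- (FF_double s Hs1), (FF_even s Hs1). ring. }
      replace (2 ^ S k * Rabs (FF s)) with (2 ^ k * Rabs (2 * FF s)).
      2:{ rewrite Rabs_mult, (Rabs_pos_eq 2) by lra. simpl. ring. }
      rewrite E. apply IH. rewrite <- RPow_abs. simpl. rewrite Rmult_1_r.
      pose proof (Rabs_pos s). nra. }
  destruct (Req_dec (FF r) 0) as [|Hn]; auto. exfalso.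
  assert (Hp : 0 < Rabs (FF r)) by (apply Rabs_pos_lt; auto).
  assert (HM : 0 <= PI * MM rho).
  { pose proof (Hk 0%nat r (Rle_refl _)). pose proof (Rabs_pos (FF r)). simpl in H1. lra. }
  destruct (archimed_cor1 (Rabs (FF r) / (PI * MM rho + 1))) as [N [HN1 HN2]].
  { apply Rdiv_lt_0_compat; lra. }
  pose proof (Hk N r (Rle_refl _)). pose proof (pow2_ge N).
  assert (0 < INR N) by (apply lt_0_INR; lia).
  assert (1 < INR N * (Rabs (FF r) / (PI * MM rho + 1))).
  { apply (Rmult_lt_compat_l (INR N)) in HN1; auto. rewrite Rinv_r in HN1 by lra. lra. }
  assert (INR N * Rabs (FF r) > PI * MM rho + 1).
  { unfold Rdiv in H4. apply (Rmult_lt_compat_r (PI * MM rho + 1)) in H4; [|lra].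
    rewrite Rmult_1_l in H4. replace (INR N * (Rabs (FF r) * / (PI * MM rho + 1)) * (PI * MM rho + 1)) with (INR N * Rabs (FF r)) in H4 by (field; lra). lra. }
  assert (INR N * Rabs (FF r) <= 2 ^ N * Rabs (FF r)) by (apply Rmult_le_compat_r; lra).
  lra.
Qed.

Lemma log_quad A B : 0 < B < A ->
  RInt (fun t => ln (A - B * cos t ^ 2)) 0 PI = 2 * PI * ln ((sqrt A + sqrt (A - B)) / 2).
Proof.
  intros HB. pose proof PI_RGT_0 as HPI.
  set (al := sqrt A). set (be := sqrt B). set (de := sqrt (A - B)).
  assert (Hal : al * al = A) by (apply sqrt_sqrt; lra).
  assert (Hbe : be * be = B) by (apply sqrt_sqrt; lra).
  assert (Hde : de * de = A - B) by (apply sqrt_sqrt; lra).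
  assert (Pbe : 0 < be) by (apply sqrt_lt_R0; lra).
  assert (Pde : 0 < de) by (apply sqrt_lt_R0; lra).
  assert (Lba : be < al) by (apply sqrt_lt_1; lra).
  set (c := (al + de) / 2). set (r := be / (2 * c)).
  assert (Pc : 0 < c) by (unfold c; lra).
  assert (Hr : Rabs r < 1).
  { unfold r. rewrite Rabs_pos_eq. apply Rmult_lt_reg_r with (2*c); [lra|].
    field_simplify; unfold c; lra. apply Rle_mult_inv_pos; lra. }
  assert (Hr' : Rabs (-r) < 1) by (rewrite Rabs_Ropp; exact Hr).
  assert (Kc : c * (1 + r^2) = al /\ 2 * c * r = be).
  { unfold r. split; [|field; lra]. apply Rmult_eq_reg_l with (4 * c); [|lra].
    field_simplify; [|lra]. unfold c. nra. }
  destruct Kc as [K1 K2].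
  assert (Ept : forall t, ln (A - B * cos t ^ 2) = 2 * ln c + (Lg r t + Lg (-r) t)).
  { intros t. unfold Lg. rewrite <- ln_mult by (apply arg_pos; assumption).
    replace (2 * ln c) with (ln (c * c)) by (rewrite ln_mult by lra; ring).
    rewrite <- ln_mult. f_equal. rewrite <- Hal, <- Hbe, <- K1, <- K2. ring.
    nra. apply Rmult_lt_0_compat; apply arg_pos; assumption. }
  apply is_RInt_unique_R. apply is_RInt_ext_R with (fun t => 2 * ln c + (Lg r t + Lg (-r) t)).
  { intros; rewrite Ept; reflexivity. }
  replace (2 * PI * ln c) with ((PI - 0) * (2 * ln c) + (FF r + FF (-r))).
  2:{ rewrite (FF_zero r Hr), (FF_zero (-r) Hr'). ring. }
  apply is_RInt_plus_R. apply is_RInt_const_R.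
  apply is_RInt_plus_R; apply RInt_correct_R, Lg_ex; assumption.
Qed.


Lemma ln_le_sub1 y : 0 < y -> ln y <= y - 1.
Proof. intros H. pose proof (exp_ineq1_le (ln y)). rewrite exp_ln in H0 by lra. lra. Qed.

Lemma harmonic_HH m : harmonic (S m) = HH (S m).
Proof.
  unfold harmonic. simpl pred. induction m. simpl. field.
  rewrite tech5, IHm. change (HH (S m) + / INR (S (S m)) = HH (S m) + / (INR (S m) + 1)). rewrite (S_INR (S m)). reflexivity.
Qed.

Lemma HH_pos m : 0 <= HH m.
Proof. induction m; simpl. lra. pose proof (pos_INR m). assert (0 < /(INR m + 1)) by (apply Rinv_0_lt_compat; lra). lra. Qed.

Lemma ln_HH m : ln (INR m + 1) <= HH m.
Proof.
  induction m. simpl. rewrite Rplus_0_l, ln_1. lra.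
  pose proof (pos_INR m).
  replace (ln (INR (S m) + 1)) with (ln (INR m + 1) + ln ((INR m + 2) / (INR m + 1))).
  2:{ rewrite <- ln_mult by (try apply Rdiv_lt_0_compat; lra). f_equal. rewrite S_INR. field. lra. }
  simpl HH. pose proof (ln_le_sub1 ((INR m + 2) / (INR m + 1))).
  assert ((INR m + 2) / (INR m + 1) - 1 = / (INR m + 1)) by (field; lra).
  assert (0 < (INR m + 2) / (INR m + 1)) by (apply Rdiv_lt_0_compat; lra). lra.
Qed.

Definition gseq N := HH (S N) - ln (INR (S N)).

Lemma gseq_decr N : gseq (S N) <= gseq N.
Proof.
  unfold gseq. pose proof (pos_INR N).
  change (HH (S N) + /(INR (S N) + 1) - ln (INR (S (S N))) <= HH (S N) - ln (INR (S N))). rewrite !S_INR.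
  assert (E : ln (INR N + 1 + 1) = ln (INR N + 1) - ln ((INR N + 1) / (INR N + 2))).
  { rewrite <- ln_div by (try apply Rdiv_lt_0_compat; lra). f_equal. field. lra. }
  rewrite E. pose proof (ln_le_sub1 ((INR N + 1) / (INR N + 2))).
  assert ((INR N + 1) / (INR N + 2) - 1 = - / (INR N + 1 + 1)) by (field; lra).
  assert (0 < (INR N + 1) / (INR N + 2)) by (apply Rdiv_lt_0_compat; lra). lra.
Qed.

Lemma gseq_pos N : 0 <= gseq N.
Proof. unfold gseq. pose proof (ln_HH N). rewrite S_INR. change (HH (S N)) with (HH N + /(INR N + 1)).
  pose proof (pos_INR N). assert (0 < / (INR N + 1)) by (apply Rinv_0_lt_compat; lra). lra. Qed.

Lemma gseq_lim : is_lim_seq gseq euler_gamma.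
Proof.
  assert (Ex : ex_finite_lim_seq gseq) by (apply ex_finite_lim_seq_decr with 0; [apply gseq_decr|apply gseq_pos]).
  pose proof (Lim_seq_correct' _ Ex) as L.
  assert (E : Lim_seq gseq = Lim_seq (fun m => harmonic m - ln (INR m))).
  { rewrite <- (Lim_seq_incr_1 (fun m => harmonic m - ln (INR m))). apply Lim_seq_ext. intros N.
    unfold gseq. rewrite (harmonic_HH N). reflexivity. }
  destruct Ex as [l Hl]. rewrite (is_lim_seq_unique _ _ Hl) in E. unfold euler_gamma. rewrite <- E. simpl.
  exact Hl.
Qed.

Lemma dig_partial n N : sum_f_R0 (fun k => / INR (S k) - / (INR k + (INR n + 1))) N = HH n + HH (S N) - HH (S N + n).
Proof.
  induction N.
  - simpl sum_f_R0. change (S 0 + n)%nat with (S n). simpl HH. simpl INR. field. pose proof (pos_INR n). lra.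
  - rewrite tech5, IHN. change (S (S N) + n)%nat with (S (S N + n)).
    change (HH (S (S N))) with (HH (S N) + / (INR (S N) + 1)).
    change (HH (S (S N + n))) with (HH (S N + n) + / (INR (S N + n) + 1)).
    rewrite plus_INR. rewrite (S_INR (S N)). replace (INR (S N) + (INR n + 1)) with (INR (S N) + INR n + 1) by ring. ring.
Qed.

Lemma HH_tail m n : 0 <= HH (m + n) - HH m <= INR n / (INR m + 1).
Proof.
  pose proof (pos_INR m).
  induction n.
  - rewrite Nat.add_0_r. simpl INR. unfold Rdiv. rewrite Rmult_0_l. lra.
  - rewrite Nat.add_succ_r. change (HH (S (m + n))) with (HH (m + n) + / (INR (m + n) + 1)).
    rewrite S_INR. rewrite plus_INR. pose proof (pos_INR n).
    assert (0 < / (INR m + INR n + 1)) by (apply Rinv_0_lt_compat; lra).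
    assert (/ (INR m + INR n + 1) <= / (INR m + 1)) by (apply Rinv_le_contravar; lra).
    idtac.
    unfold Rdiv in *. rewrite Rmult_plus_distr_r, Rmult_1_l. lra.
Qed.

Lemma inv_lim : is_lim_seq (fun N => / (INR (S N) + 1)) 0.
Proof.
  assert (H : is_lim_seq (fun N => / INR N) (Rbar_inv p_infty)).
  { apply is_lim_seq_inv. apply is_lim_seq_INR. discriminate. }
  simpl in H. apply (is_lim_seq_incr_n _ 2) in H.
  eapply is_lim_seq_ext; [|apply H]. intros N. cbv beta.
  replace (N + 2)%nat with (S (S N)) by lia. rewrite (S_INR (S N)). reflexivity.
Qed.

Lemma digamma_val n : digamma (INR n + 1) = - euler_gamma + HH n.
Proof.
  unfold digamma. f_equal. apply is_series_unique.
  assert (L : is_lim_seq (fun N => HH n + HH (S N) - HH (S N + n)) (HH n)).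
  { apply is_lim_seq_le_le with (u := fun N => HH n - INR n * / (INR (S N) + 1)) (w := fun _ => HH n).
    - intros N. pose proof (HH_tail (S N) n). unfold Rdiv in H. lra.
    - replace (HH n) with (HH n - INR n * 0) at 1 by ring.
      apply is_lim_seq_minus'. apply is_lim_seq_const.
      pose proof inv_lim as IL.
      apply (is_lim_seq_scal_l _ (INR n)) in IL. simpl in IL. rewrite Rmult_0_r in IL.
      rewrite Rmult_0_r. exact IL.
    - apply is_lim_seq_const. }
  assert (L2 : is_lim_seq (sum_n (fun k => / INR (S k) - / (INR k + (INR n + 1)))) (HH n)).
  { apply is_lim_seq_ext with (2 := L). intros N. rewrite sum_n_Reals, dig_partial. reflexivity. }
  exact L2.
Qed.


Lemma OO_HH M : OO M = HH (2 * M) - HH M / 2.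
Proof.
  induction M. simpl. lra.
  replace (2 * S M)%nat with (S (S (2 * M))) by lia.
  change (OO (S M)) with (OO M + / (2 * INR M + 1)).
  change (HH (S (S (2 * M)))) with (HH (S (2*M)) + / (INR (S (2 * M)) + 1)).
  change (HH (S (2 * M))) with (HH (2*M) + / (INR (2 * M) + 1)).
  change (HH (S M)) with (HH M + / (INR M + 1)).
  rewrite IHM, S_INR, mult_INR. simpl INR. pose proof (pos_INR M). field. lra.
Qed.

Definition dd m := - ln (aa m) - OO m.

Lemma dd_decr m : dd (S m) <= dd m.
Proof.
  unfold dd. pose proof (pos_INR m). pose proof (aa_pos m).
  change (aa (S m)) with (aa m * (2 * INR m + 1) / (2 * INR m + 2)).
  change (OO (S m)) with (OO m + / (2 * INR m + 1)).
  replace (aa m * (2 * INR m + 1) / (2 * INR m + 2)) with (aa m * ((2 * INR m + 1) / (2 * INR m + 2))) by (field; lra).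
  rewrite ln_mult by (try apply Rdiv_lt_0_compat; lra).
  assert (E : - ln ((2 * INR m + 1) / (2 * INR m + 2)) = ln ((2 * INR m + 2) / (2 * INR m + 1))).
  { rewrite <- ln_Rinv by (apply Rdiv_lt_0_compat; lra). f_equal. field. lra. }
  pose proof (ln_le_sub1 ((2 * INR m + 2) / (2 * INR m + 1))).
  assert ((2 * INR m + 2) / (2 * INR m + 1) - 1 = / (2 * INR m + 1)) by (field; lra).
  assert (0 < (2 * INR m + 2) / (2 * INR m + 1)) by (apply Rdiv_lt_0_compat; lra). lra.
Qed.

Lemma dd_mono m M : (m <= M)%nat -> dd M <= dd m.
Proof.
  induction 1. lra. pose proof (dd_decr m0). lra.
Qed.

Lemma wallis_ln M : (1 <= M)%nat -> (ln PI + ln (INR M)) / 2 <= - ln (aa M).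
Proof.
  intros HM. pose proof (wallis_bound M) as W. pose proof PI_RGT_0. pose proof (aa_pos M).
  assert (0 < INR M) by (apply lt_0_INR; lia).
  assert (0 < PI * INR M * aa M ^ 2) by (apply Rmult_lt_0_compat; [nra|apply pow_lt; lra]).
  assert (ln (PI * INR M * aa M ^ 2) <= 0) by (rewrite <- ln_1; apply ln_le; lra).
  rewrite ln_mult, ln_mult, ln_pow in H3 by (try apply pow_lt; nra). simpl INR in H3. lra.
Qed.

Definition Lc := ln PI / 2 - euler_gamma / 2 - ln 2.

Definition ee N := (ln PI + ln (INR (S N))) / 2 - OO (S N).

Lemma ee_eq N : ee N = ln PI / 2 - gseq (2 * N + 1) - ln 2 + gseq N / 2.
Proof.
  unfold ee, gseq. rewrite OO_HH. replace (S (2 * N + 1)) with (2 * S N)%nat by lia.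
  rewrite mult_INR. replace (INR 2) with 2 by reflexivity.
  rewrite ln_mult by (try apply lt_0_INR; lia || lra). lra.
Qed.

Lemma ee_lim : is_lim_seq ee Lc.
Proof.
  pose proof gseq_lim as G.
  assert (G2 : is_lim_seq (fun N => gseq (2 * N + 1)) euler_gamma).
  { apply (is_lim_seq_subseq gseq euler_gamma (fun N => 2 * N + 1)%nat); auto.
    apply eventually_subseq. intros; lia. }
  apply is_lim_seq_ext with (fun N => ln PI / 2 - gseq (2 * N + 1) - ln 2 + gseq N / 2).
  { intros; symmetry; apply ee_eq. }
  unfold Lc. replace (ln PI / 2 - euler_gamma / 2 - ln 2) with (ln PI / 2 - euler_gamma - ln 2 + euler_gamma / 2) by lra.
  apply is_lim_seq_plus'. apply is_lim_seq_minus'. apply is_lim_seq_minus'. apply is_lim_seq_const. exact G2.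
  apply is_lim_seq_const.
  apply is_lim_seq_ext with (fun N => / 2 * gseq N). intros; unfold Rdiv; ring.
  replace (euler_gamma / 2) with (/2 * euler_gamma) by (unfold Rdiv; ring).
  apply (is_lim_seq_scal_l gseq (/2) euler_gamma) in G. exact G.
Qed.

Lemma key m : OO m + Lc <= - ln (aa m).
Proof.
  assert (H : forall N, ee (N + m) <= dd m).
  { intros N. apply Rle_trans with (dd (S (N + m))).
    - unfold ee, dd. pose proof (wallis_ln (S (N + m)) ltac:(lia)). lra.
    - apply dd_mono. lia. }
  pose proof ee_lim as E. apply (is_lim_seq_incr_n ee m) in E.
  pose proof (is_lim_seq_le _ _ _ _ H E (is_lim_seq_const (dd m))) as Le. simpl in Le.
  unfold dd in Le. lra.
Qed.


Lemma PYr_val n y : (y <= n)%nat -> PYr n y = aa y * aa (n - y).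
Proof.
  intros Hy. pose proof PI_RGT_0.
  assert (HF : forall x, 0 <= x <= 1 -> continuous (binom_channel n y) x).
  { intros x _. apply derive_cont_R. unfold binom_channel. auto_derive. exact I. }
  pose proof (arcsine_sub (binom_channel n y) HF) as S.
  unfold PYr. rewrite (is_RInt_gen_unique _ _ S).
  rewrite (RInt_ext_R _ (fun t => Binomial.C n y * kf (2*y) (2*(n-y)) t)).
  2:{ intros t _. unfold binom_channel, kf. rewrite !pow_mult.
      assert (E1 : (1 - cos t) / 2 = sin (t/2) ^ 2).
      { replace t with (2 * (t/2)) at 1 by field. rewrite cos_2a_sin. field. }
      assert (E2 : 1 - (1 - cos t) / 2 = cos (t/2) ^ 2).
      { rewrite E1. pose proof (sin2_cos2 (t/2)) as S2. unfold Rsqr in S2. simpl. lra. }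
      rewrite E2, E1. ring. }
  rewrite <- (Kb y (n - y)). replace (y + (n - y))%nat with n by lia.
  assert (R : RInt (fun t => Binomial.C n y * kf (2 * y) (2 * (n - y)) t) 0 PI = Binomial.C n y * K (2*y) (2*(n-y))).
  { apply is_RInt_unique_R, is_RInt_scal_R, K_is. }
  rewrite R. field. lra.
Qed.

Lemma sum_lin3 (f g h : nat -> R) a b c n :
  sum_f_R0 (fun y => a * f y + b * g y + c * h y) n = a * sum_f_R0 f n + b * sum_f_R0 g n + c * sum_f_R0 h n.
Proof.
  rewrite !plus_sum, !scal_sum. f_equal; [f_equal|]; apply sum_eq; intros; ring.
Qed.

Lemma entropy_bound n : ln (PI / 4) + digamma (INR n + 1) <= entropy n (PYr n).
Proof.
  pose proof PI_RGT_0.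
  rewrite digamma_val. unfold entropy.
  rewrite (sum_eq _ (fun y => aa y * aa (n - y) * ln (aa y) + aa y * aa (n - y) * ln (aa (n - y)))).
  2:{ intros i Hi. rewrite PYr_val by lia. rewrite ln_mult by apply aa_pos. ring. }
  assert (Le : sum_f_R0 (fun y => aa y * aa (n - y) * ln (aa y) + aa y * aa (n - y) * ln (aa (n - y))) n
     <= sum_f_R0 (fun y => -1 * (aa y * aa (n - y) * OO y) + -1 * (aa y * aa (n - y) * OO (n - y)) + (-2 * Lc) * (aa y * aa (n - y))) n).
  { apply sum_Rle. intros i Hi. pose proof (key i). pose proof (key (n - i)).
    pose proof (aa_pos i). pose proof (aa_pos (n - i)).
    assert (0 < aa i * aa (n - i)) by (apply Rmult_lt_0_compat; auto). nra. }
  rewrite sum_lin3 in Le.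
  assert (E1 : sum_f_R0 (fun y => aa y * aa (n - y) * OO y) n = HH n / 2) by (apply EE_val).
  assert (E2 : sum_f_R0 (fun y => aa y * aa (n - y) * OO (n - y)) n = HH n / 2).
  { rewrite <- (EE_val n). unfold EE. rewrite sum_refl. apply sum_eq. intros i Hi.
    replace (n - (n - i))%nat with i by lia. ring. }
  assert (E3 : sum_f_R0 (fun y => aa y * aa (n - y)) n = 1) by (apply cc_1).
  rewrite E1, E2, E3 in Le.
  assert (L4 : ln (PI / 4) = ln PI - 2 * ln 2).
  { unfold Rdiv. rewrite ln_mult by lra. rewrite ln_Rinv by lra.
    replace 4 with (2 * 2) by ring. rewrite ln_mult by lra. ring. }
  rewrite L4. unfold Lc in Le. lra.
Qed.

Lemma part1 (n : nat) (hn : (1 <= n)%nat) :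
  is_RInt_gen
    (fun x => arcsine_density x * ln (INR n * x * (1 - x) + / 12))
    (at_right 0) (at_left 1)
    (2 * ln ((1 + sqrt (3 * INR n + 1)) / (4 * sqrt 3))).
Proof.
  pose proof PI_RGT_0 as HPI.
  assert (Hn : 1 <= INR n) by (apply (le_INR 1); exact hn).
  set (F := fun x => ln (INR n * x * (1 - x) + / 12)).
  assert (HF : forall x, 0 <= x <= 1 -> continuous F x).
  { intros x Hx. apply derive_cont_R. unfold F. auto_derive.
    assert (0 <= x * (1 - x)) by nra. assert (0 < /12) by lra. nra. }
  pose proof (arcsine_sub F HF) as S.
  set (A := INR n / 4 + / 12). set (B := INR n / 4).
  assert (E : RInt (fun t => F ((1 - cos t) / 2)) 0 PI = RInt (fun t => ln (A - B * cos t ^ 2)) 0 PI).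
  { apply RInt_ext_R. intros t _. unfold F, A, B. f_equal. field. }
  cbv beta in S. rewrite E, log_quad in S by (unfold A, B; lra).
  assert (s3 : 0 < sqrt 3) by (apply sqrt_lt_R0; lra).
  assert (Q1 : sqrt A = sqrt (3 * INR n + 1) / (2 * sqrt 3)).
  { apply sqrt_lem_1. unfold A; lra. apply Rle_mult_inv_pos. apply sqrt_pos. lra.
    unfold A. replace (sqrt (3 * INR n + 1) / (2 * sqrt 3) * (sqrt (3 * INR n + 1) / (2 * sqrt 3)))
      with ((sqrt (3 * INR n + 1) * sqrt (3 * INR n + 1)) / (4 * (sqrt 3 * sqrt 3))) by (field; lra).
    rewrite !sqrt_sqrt by lra. field. }
  assert (Q2 : sqrt (A - B) = 1 / (2 * sqrt 3)).
  { apply sqrt_lem_1. unfold A, B; lra. apply Rle_mult_inv_pos; lra.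
    replace (1 / (2 * sqrt 3) * (1 / (2 * sqrt 3))) with (1 / (4 * (sqrt 3 * sqrt 3))) by (field; lra).
    rewrite sqrt_sqrt by lra. unfold A, B. field. }
  rewrite Q1, Q2 in S.
  replace (/ PI * (2 * PI * ln ((sqrt (3 * INR n + 1) / (2 * sqrt 3) + 1 / (2 * sqrt 3)) / 2)))
    with (2 * ln ((1 + sqrt (3 * INR n + 1)) / (4 * sqrt 3))) in S.
  exact S.
  replace ((sqrt (3 * INR n + 1) / (2 * sqrt 3) + 1 / (2 * sqrt 3)) / 2) with ((1 + sqrt (3 * INR n + 1)) / (4 * sqrt 3)) by (field; lra).
  field. lra.
Qed.

Theorem mainTheorem15 (n : nat) (hn : (1 <= n)%nat) :
  is_RInt_gen
    (fun x => arcsine_density x * ln (INR n * x * (1 - x) + / 12))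
    (at_right 0) (at_left 1)
    (2 * ln ((1 + sqrt (3 * INR n + 1)) / (4 * sqrt 3)))
  /\
  ln (PI / 4) + digamma (INR n + 1) <= entropy n (PYr n).
Proof.
  split. apply part1; exact hn. apply entropy_bound.
Qed.
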